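(* Let $G$ be a connected graph with infinitely many nodes such that ${}^{*}G$ has a hypernode not in its principal galaxy $\Gamma_0$. Let $\Gamma_a,\Gamma_b,\Gamma_c$ be galaxies of ${}^{*}G$ different from $\Gamma_0$. If $\Gamma_a$ is closer to $\Gamma_0$ than is $\Gamma_b$, and $\Gamma_b$ is closer to $\Gamma_0$ than is $\Gamma_c$, then $\Gamma_a$ is closer to $\Gamma_0$ than is $\Gamma_c$. Thus the set of galaxies is partially ordered according to closeness to $\Gamma_0$.
   Context: Conventions. $G=\{X,B\}$ is a graph whose branches are two-element subsets of $X$, and $d$ is the graph distance. Fix a free ultrafilter $\mathcal F$ on $\mathbb N$. Hypernodes and enlargement. Hypernodes are classes $[x_n]$ of node sequences, with two sequences identified when they agree on a set in $\mathcal F$. A standard hypernode is the class of a constant sequence. ${}^{*}G$ consists of the hypernodes and the hyperbranches $[\{x_n,y_n\}]$ with $\{n:\{x_n,y_n\}\in B\}\in\mathcal F$. Galaxies. Hypernodes $[x_n]$ and $[y_n]$ are limitedly distant if $\{n:d(x_n,y_n)\le k\}\in\mathcal F$ for some $k\in\mathbb N$. Galaxies are the classes of this equivalence relation, together with the hyperbranches between their hypernodes. The principal galaxy $\Gamma_0$ contains the standard hypernodes. Closeness. For galaxies $\Gamma_a,\Gamma_b\ne\Gamma_0$, $\Gamma_a$ is closer to $\Gamma_0$ than is $\Gamma_b$ if there exist ${\bf y}=[y_n]\in\Gamma_a$, ${\bf z}=[z_n]\in\Gamma_b$ and ${\bf x}=[x_n]\in\Gamma_0$ such that for every $m\in\mathbb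 N$, $\{n: d(z_n,x_n)-d(y_n,x_n)\ge m\}\in\mathcal F$. *)

(* Defs.v *)
From Stdlib Require Import Arith Lia List Classical ClassicalEpsilon.

Set Implicit Arguments.

Record free_ultrafilter (F : (nat -> Prop) -> Prop) : Prop := {
  uf_full : F (fun _ => True);
  uf_not_empty : ~ F (fun _ => False);
  uf_upward : forall A B : nat -> Prop, F A -> (forall n, A n -> B n) -> F B;
  uf_inter : forall A B : nat -> Prop, F A -> F B -> F (fun n => A n /\ B n);
  uf_ultra : forall A : nat -> Prop, F A \/ F (fun n => ~ A n);
  uf_free : forall l : list nat, ~ F (fun n => In n l)
}.

(* A graph {X,B}: the branch {x,y} is present iff E x y; E is symmetric and
   irreflexive (branches are two-element subsets). *)
Definition simple_graph (X : Type) (E : X -> X -> Prop) : Prop :=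
  (forall x y, E x y -> E y x) /\ (forall x, ~ E x x).

Fixpoint walk (X : Type) (E : X -> X -> Prop) (n : nat) (x y : X) : Prop :=
  match n with
  | 0 => x = y
  | S k => exists z, E x z /\ walk E k z y
  end.

Definition connected (X : Type) (E : X -> X -> Prop) : Prop :=
  forall x y, exists n, walk E n x y.

Definition infinitely_many_nodes (X : Type) : Prop :=
  ~ exists l : list X, forall x, In x l.

Lemma least_exists (P : nat -> Prop) :
  (exists n, P n) -> exists n, P n /\ forall m, P m -> n <= m.
Proof.
  intros [n Hn].
  induction n as [n IH] using lt_wf_ind.
  destruct (classic (exists m, m < n /\ P m)) as [[m [Hm Pm]]|Hno].
  - exact (IH m Hm Pm).
  - exists n; split; [exact Hn|].
    intros m Pm; destruct (le_gt_dec n m) as [|Hlt]; [assumption|].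
    exfalso; apply Hno; eauto.
Qed.

(* Graph distance d(x,y): the least length of a walk from x to y
   (0 by convention if there is none, which never happens for connected G). *)
Definition dist (X : Type) (E : X -> X -> Prop) (x y : X) : nat :=
  match excluded_middle_informative (exists n, walk E n x y) with
  | left H => proj1_sig (constructive_indefinite_description _ (least_exists _ H))
  | right _ => 0
  end.

(* Hypernodes are represented by node sequences nat -> X; all notions below
   are invariant under F-a.e. equality, so they are notions on hypernodes. *)

Definition lim_dist (X : Type) (E : X -> X -> Prop) (F : (nat -> Prop) -> Prop)
  (u v : nat -> X) : Prop :=
  exists k : nat, F (fun n => dist E (u n) (v n) <= k).

Definition is_galaxy (X : Type) (E : X -> X -> Prop) (F : (nat -> Prop) -> Prop)
  (Gam : (nat -> X) -> Prop) : Prop :=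
  exists u, forall v, Gam v <-> lim_dist E F u v.

Definition Gamma0 (X : Type) (E : X -> X -> Prop) (F : (nat -> Prop) -> Prop)
  (v : nat -> X) : Prop :=
  exists x0 : X, lim_dist E F (fun _ => x0) v.

(* Ga is closer to Gamma0 than Gb:
   exists y in Ga, z in Gb, x in Gamma0, forall m,
   {n | d(z_n,x_n) - d(y_n,x_n) >= m} in F
   (the integer inequality d(z,x) - d(y,x) >= m, m in N, is written
    d(y,x) + m <= d(z,x)). *)
Definition closer (X : Type) (E : X -> X -> Prop) (F : (nat -> Prop) -> Prop)
  (Ga Gb : (nat -> X) -> Prop) : Prop :=
  exists y z x : nat -> X, Ga y /\ Gb z /\ Gamma0 E F x /\
    forall m : nat, F (fun n => dist E (y n) (x n) + m <= dist E (z n) (x n)).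

(* Main.v *)
Require Import Defs.
From Stdlib Require Import Arith Lia List Classical ClassicalEpsilon.

Section L.
Variable X : Type.
Variable E : X -> X -> Prop.

Lemma walk_app a b x y z : walk E a x y -> walk E b y z -> walk E (a+b) x z.
Proof.
  revert x; induction a as [|a IH]; intros x H1 H2; simpl in *.
  - subst; auto.
  - destruct H1 as [w [Hw Hw']]. exists w; split; auto.
Qed.

Lemma walk_sym (Hs : forall x y, E x y -> E y x) n x y : walk E n x y -> walk E n y x.
Proof.
  revert x; induction n as [|n IH]; intros x H; simpl in *.
  - auto.
  - destruct H as [w [Hw Hw']]. change (walk E (S n) y x). replace (S n) with (n + 1) by lia.
    apply walk_app with w; auto. simpl. exists x; split; auto.
Qed.

Lemma dist_spec (Hc : connected E) x y :
  walk E (dist E x y) x y /\ forall n, walk E n x y -> dist E x y <= n.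
Proof.
  unfold dist. destruct (excluded_middle_informative _) as [H|H].
  - destruct (constructive_indefinite_description _ _) as [k [Hk Hm]]; simpl; auto.
  - exfalso; apply H; apply Hc.
Qed.

Lemma dist_tri (Hc : connected E) x y z : dist E x z <= dist E x y + dist E y z.
Proof.
  destruct (dist_spec Hc x y) as [A _]. destruct (dist_spec Hc y z) as [B _].
  destruct (dist_spec Hc x z) as [_ C]. apply C. eapply walk_app; eauto.
Qed.

Lemma dist_sym (Hs : forall x y, E x y -> E y x) (Hc : connected E) x y :
  dist E x y = dist E y x.
Proof.
  destruct (dist_spec Hc x y) as [A A']. destruct (dist_spec Hc y x) as [B B'].
  apply walk_sym in A; auto. apply walk_sym in B; auto.
  specialize (A' _ B); specialize (B' _ A); lia.
Qed.
End L.

Theorem theorem4p3 (X : Type) (E : X -> X -> Prop) (F : (nat -> Prop) -> Prop)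
  (HF : free_ultrafilter F)
  (HG : simple_graph E)
  (Hconn : connected E)
  (Hinf : infinitely_many_nodes X)
  (Hnp : exists u : nat -> X, ~ Gamma0 E F u)
  (Ga Gb Gc : (nat -> X) -> Prop)
  (HGa : is_galaxy E F Ga) (HGb : is_galaxy E F Gb) (HGc : is_galaxy E F Gc)
  (Ha0 : ~ (forall v, Ga v <-> Gamma0 E F v))
  (Hb0 : ~ (forall v, Gb v <-> Gamma0 E F v))
  (Hc0 : ~ (forall v, Gc v <-> Gamma0 E F v)) :
  closer E F Ga Gb -> closer E F Gb Gc -> closer E F Ga Gc.
Proof.
  intros [y1 [z1 [x1 [Ay1 [Bz1 [[x0 [k3 H3]] H1]]]]]]
         [y2 [z2 [x2 [By2 [Cz2 [[x0' [k4 H4]] H2]]]]]].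
  destruct HGb as [u Hu].
  apply Hu in Bz1. apply Hu in By2.
  destruct Bz1 as [k5 H5]. destruct By2 as [k6 H6].
  destruct HG as [Hs _].
  pose (c := dist E x0 x0').
  exists y1, z2, x1. split; [auto|split; [auto|split]].
  - exists x0, k3; auto.
  - intro m.
    assert (G := uf_inter HF _ _ (H1 m) (uf_inter HF _ _ (H2 (k5 + k6 + 2 * (k3 + c + k4)))
      (uf_inter HF _ _ H3 (uf_inter HF _ _ H4 (uf_inter HF _ _ H5 H6))))).
    eapply (uf_upward HF); [exact G|]. simpl.
    intros n [h1 [h2 [h3 [h4 [h5 h6]]]]].
    pose proof (dist_tri _ _ Hconn (z2 n) (x1 n) (x2 n)).
    pose proof (dist_tri _ _ Hconn (x1 n) x0 (x2 n)).
    pose proof (dist_tri _ _ Hconn x0 x0' (x2 n)).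
    pose proof (dist_tri _ _ Hconn (z1 n) (y2 n) (x1 n)).
    pose proof (dist_tri _ _ Hconn (y2 n) (x2 n) (x1 n)).
    pose proof (dist_tri _ _ Hconn (z1 n) (u n) (y2 n)).
    rewrite (dist_sym _ _ Hs Hconn (x1 n) x0) in *.
    rewrite (dist_sym _ _ Hs Hconn (z1 n) (u n)) in *.
    rewrite (dist_sym _ _ Hs Hconn (x2 n) (x1 n)) in *.
    subst c; lia.
Qed.
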